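(* Let $w$ be a non-periodic $\mathcal{A}$-strict standard episturmian word on an alphabet $\mathcal{A}$ with $\delta(w)<\sqrt3$. Then $\mathcal{A}$ contains exactly two letters, and $w$ is a characteristic Sturmian word.
   Context: For a finite word $u$, $u^{(+)}$ denotes its right palindromic closure, the shortest palindrome having $u$ as a prefix. Given an infinite word $\Delta=\delta_1\delta_2\cdots$ on $\mathcal{A}$, the standard episturmian word with directive word $\Delta$ is the limit of the words $\pi_1=\varepsilon$, $\pi_{i+1}=(\pi_i\delta_i)^{(+)}$; it is $\mathcal{A}$-strict if every letter of $\mathcal{A}$ occurs infinitely many times in $\Delta$. For an infinite word $w$ with infinitely many palindromic prefixes (the empty word counting as one), $(n_i)_{i\ge1}$ is the increasing sequence of their lengths and $\delta(w)=\limsup n_{i+1}/n_i$. Characteristic Sturmian word on $\{a,b\}$ ($a\ne b$): for positive integers $s_1,s_2,\dots$, let $\sigma_0=a$, $\sigma_1=a^{s_1-1}b$, $\sigma_n=\sigma_{n-1}^{s_n}\sigma_{n-2}$ ($n\ge2$); the limit of the $\sigma_n$ is the characteristic Sturmian word of slope $[0;s_1,s_2,\dots]$. *)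

(* Defs.v *)
From Stdlib Require Import Rdefinitions.
From HB Require Import structures.
From mathcomp Require Import all_boot all_order all_algebra.
From mathcomp Require Import all_classical all_reals all_analysis.
From mathcomp Require Import Rstruct Rstruct_topology.
Set Implicit Arguments. Unset Strict Implicit. Unset Printing Implicit Defensive.
Import Order.TTheory GRing.Theory Num.Theory.

(* Infinite words over A are functions nat -> A; finite words are seq A. *)

Definition is_pal (A : eqType) (u : seq A) : bool := rev u == u.

Definition is_rpal_closure (A : eqType) (u p : seq A) : Prop :=
  is_pal p /\ prefix u p /\
  (forall q : seq A, is_pal q -> prefix u q -> size p <= size q).

Definition word_limit (A : eqType) (x : nat -> seq A) (w : nat -> A) : Prop :=
  forall m, exists N, forall n, N <= n -> m < size (x n) /\ nth (w m) (x n) m = w m.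

(* w is the standard episturmian word with directive word D = d_1 d_2 ...
   (stored 0-indexed: D 0 = d_1). *)
Definition std_episturmian (A : eqType) (D : nat -> A) (w : nat -> A) : Prop :=
  exists pi : nat -> seq A,
    pi 0 = [::] /\
    (forall i, is_rpal_closure (rcons (pi i) (D i)) (pi i.+1)) /\
    word_limit pi w.

Definition strict_directive (A : finType) (D : nat -> A) : Prop :=
  forall (a : A) (N : nat), exists n, N <= n /\ D n = a.

Definition periodic_word (A : eqType) (w : nat -> A) : Prop :=
  exists p, 0 < p /\ forall n, w (n + p) = w n.

Definition pref (A : Type) (w : nat -> A) (m : nat) : seq A := mkseq w m.

Definition enum_pal_prefixes (A : eqType) (w : nat -> A) (n : nat -> nat) : Prop :=
  (forall i, n i < n i.+1) /\
  (forall m, is_pal (pref w m) <-> exists i, n i = m).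

Definition delta_of (n : nat -> nat) : \bar R :=
  limn_esup (fun i => ((n i.+1)%:R / (n i)%:R : R)%:E).

(* sigma_n for the characteristic Sturmian word with slope [0; s_1, s_2, ...]
   (s k = s_k, s 0 is unused).  sigma_pair n = (sigma_n, sigma_{n+1}). *)
Fixpoint sigma_pair (A : Type) (a b : A) (s : nat -> nat) (n : nat) : seq A * seq A :=
  match n with
  | 0 => ([:: a], nseq (s 1).-1 a ++ [:: b])
  | k.+1 => let (x, y) := sigma_pair a b s k in
            (y, flatten (nseq (s k.+2) y) ++ x)
  end.

Definition sturm_sigma (A : Type) (a b : A) (s : nat -> nat) (n : nat) : seq A :=
  (sigma_pair a b s n).1.

Definition characteristic_sturmian (A : eqType) (w : nat -> A) : Prop :=
  exists (a b : A) (s : nat -> nat),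
    a != b /\ (forall k, 1 <= k -> 0 < s k) /\ word_limit (sturm_sigma a b s) w.

(* Main.v *)
Require Import Defs.
From Stdlib Require Import Rdefinitions.
From mathcomp Require Import all_boot all_order all_algebra.
From mathcomp Require Import all_classical all_reals all_analysis.
From mathcomp Require Import Rstruct Rstruct_topology.
From mathcomp Require Import zify ring lra.
Import Order.TTheory GRing.Theory Num.Theory.
Set Implicit Arguments.
Unset Strict Implicit.
Unset Printing Implicit Defensive.

Lemma prefix_nth (T : eqType) (s t : seq T) x i :
  prefix s t -> (i < size s)%N -> nth x s i = nth x t i.
Proof. by move=> /prefixP [u ->] Hi; rewrite nth_cat Hi. Qed.

Lemma size_pref (T : Type) (w : nat -> T) m : size (pref w m) = m.
Proof. exact: size_mkseq. Qed.

Lemma nth_pref (T : Type) (w : nat -> T) x m i : (i < m)%N -> nth x (pref w m) i = w i.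
Proof. exact: nth_mkseq. Qed.

Lemma prefix_pref (T : eqType) (w : nat -> T) a b : (a <= b)%N -> prefix (pref w a) (pref w b).
Proof.
move=> ab; rewrite prefixE size_pref; apply/eqP.
apply: (@eq_from_nth _ (w 0)); first by rewrite size_takel ?size_pref.
move=> i; rewrite size_takel ?size_pref // => ia.
by rewrite nth_take // !nth_pref // (leq_trans ia ab).
Qed.

Lemma palP (T : eqType) (w : nat -> T) m :
  is_pal (pref w m) <-> (forall i, (i < m)%N -> w (m - i.+1) = w i).
Proof.
rewrite /is_pal; split.
  move=> /eqP H i im.
  have := congr1 (fun s => nth (w 0) s i) H.
  by rewrite nth_rev size_pref // !nth_pref // ltn_subrL (leq_ltn_trans _ im).
move=> H; apply/eqP; apply: (@eq_from_nth _ (w 0)); first by rewrite size_rev.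
move=> i; rewrite size_rev size_pref => im.
by rewrite nth_rev size_pref // !nth_pref // ?H // ltn_subrL (leq_ltn_trans _ im).
Qed.

Lemma pref_eq (T : eqType) (w : nat -> T) (s : seq T) :
  (forall i, (i < size s)%N -> nth (w 0) s i = w i) -> s = pref w (size s).
Proof.
move=> H; apply: (@eq_from_nth _ (w 0)); first by rewrite size_pref.
by move=> i Hi; rewrite nth_pref // H.
Qed.



Lemma epi_facts (A : eqType) (D : nat -> A) (w : nat -> A) (pi : nat -> seq A) :
  pi 0 = [::] ->
  (forall i, is_rpal_closure (rcons (pi i) (D i)) (pi i.+1)) ->
  word_limit pi w ->
  let nn := fun i => size (pi i) in
  [/\ nn 0 = 0%N,
      (forall i, nn i < nn i.+1)%N,
      (forall i, is_pal (pref w (nn i))),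
      (forall i, w (nn i) = D i) &
      (forall i q, is_pal q -> prefix (pref w (nn i).+1) q -> (nn i.+1 <= size q)%N)].
Proof.
move=> H0 Hcl Hlim nn.
have Hpre i : prefix (rcons (pi i) (D i)) (pi i.+1) by case: (Hcl i) => _ [].
have Hinc i : (nn i < nn i.+1)%N.
  by have := size_prefix (Hpre i); rewrite size_rcons.
have Hch i j : (i <= j)%N -> prefix (pi i) (pi j).
  elim: j => [|j IH]; first by rewrite leqn0 => /eqP ->; exact: prefix_refl.
  rewrite leq_eqVlt => /orP [/eqP -> | ij]; first exact: prefix_refl.
  apply: prefix_trans (IH ij) _.
  exact: prefix_trans (prefix_rcons _ (D j)) (Hpre j).
have Hpi i : pi i = pref w (nn i).
  rewrite /nn; apply: pref_eq => m Hm.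
  have [N HN] := Hlim m.
  have [Hs Hn] := HN (maxn N i) (leq_maxl _ _).
  rewrite (prefix_nth _ (Hch i (maxn N i) (leq_maxr _ _)) Hm).
  by rewrite (set_nth_default (w m)) // (leq_trans Hm) // size_prefix // Hch // leq_maxr.
have Hpal i : is_pal (pi i).
  case: i => [|i]; first by rewrite H0.
  by case: (Hcl i).
have Hrc i : rcons (pi i) (D i) = pref w (nn i).+1.
  have -> : (nn i).+1 = size (rcons (pi i) (D i)) by rewrite size_rcons.
  apply: pref_eq => m; rewrite size_rcons ltnS => Hm.
  rewrite (prefix_nth _ (Hpre i)) ?size_rcons ?ltnS // Hpi nth_pref //.
  by apply: leq_trans (Hinc i); rewrite ltnS.
split => //.
- by rewrite /nn H0.
- by move=> i; rewrite -Hpi.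
- move=> i; have := congr1 (fun s => nth (w 0) s (nn i)) (Hrc i).
  by rewrite nth_rcons ltnn eqxx nth_pref.
- move=> i q Hq; rewrite -Hrc => Hp.
  by case: (Hcl i) => _ [_]; apply.
Qed.

Lemma inc_lt (f : nat -> nat) : (forall i, (f i < f i.+1)%N) ->
  forall i j, (i < j)%N -> (f i < f j)%N.
Proof.
move=> Hf i; elim=> // j IH; rewrite ltnS leq_eqVlt => /orP [/eqP -> //|ij].
exact: ltn_trans (IH ij) (Hf j).
Qed.

Lemma inc_ltE (f : nat -> nat) : (forall i, (f i < f i.+1)%N) ->
  forall i j, (f i < f j)%N = (i < j)%N.
Proof.
move=> Hf i j; case: (ltnP i j) => ij; first by rewrite inc_lt.
apply/negbTE; rewrite -leqNgt.
move: ij; rewrite leq_eqVlt => /orP [/eqP -> //|ji].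
exact: ltnW (inc_lt Hf ji).
Qed.

Lemma inc_ge (f : nat -> nat) : (forall i, (f i < f i.+1)%N) -> forall i, (f 0 + i <= f i)%N.
Proof.
move=> Hf; elim=> [|i IH]; first by rewrite addn0.
by rewrite addnS; apply: leq_ltn_trans IH (Hf i).
Qed.

Fixpoint lastocc (A : eqType) (D : nat -> A) (x : A) (k : nat) : option nat :=
  match k with
  | 0 => None
  | k'.+1 => if D k' == x then Some k' else lastocc D x k'
  end.

Lemma lastocc_some (A : eqType) (D : nat -> A) x k j : lastocc D x k = Some j ->
  [/\ (j < k)%N, D j = x & forall i, (j < i < k)%N -> D i != x].
Proof.
elim: k => //= k IH; case: eqP => [Hk [<-]|Hk /IH [jk Dj Hi]].
  by split=> // i /andP [ki ik]; have := leq_ltn_trans ki ik; rewrite ltnn.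
split=> //; first exact: ltnW.
move=> i /andP [ji]; rewrite ltnS leq_eqVlt => /orP [/eqP ->|ik]; first by apply/eqP.
by apply: Hi; rewrite ji.
Qed.

Lemma lastocc_none (A : eqType) (D : nat -> A) x k : lastocc D x k = None ->
  forall i, (i < k)%N -> D i != x.
Proof.
elim: k => //= k IH; case: eqP => // Hk /IH Hi i.
by rewrite ltnS leq_eqVlt => /orP [/eqP ->|]; [apply/eqP|apply: Hi].
Qed.

Lemma lastocc_someI (A : eqType) (D : nat -> A) x k j :
  (j < k)%N -> D j = x -> (forall i, (j < i < k)%N -> D i != x) -> lastocc D x k = Some j.
Proof.
elim: k => // k IH; rewrite ltnS leq_eqVlt => /orP [/eqP <- /= -> _|jk Dj Hi] /=.
  by rewrite eqxx.
rewrite (negbTE (Hi k _)); last by rewrite jk ltnSn.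
apply: IH => // i /andP [ji ik]; apply: Hi; rewrite ji /=; exact: ltnW.
Qed.

Lemma per_pal (A : eqType) (w : nat -> A) a b : is_pal (pref w a) -> is_pal (pref w b) ->
  (a <= b)%N -> forall i, (i < a)%N -> w (i + (b - a)) = w i.
Proof.
move=> /palP Pa /palP Pb ab i ia.
rewrite -(Pa i ia) -(Pb (a - i.+1)); last by lia.
congr w; lia.
Qed.

Lemma pal_enum (A : eqType) (w : nat -> A) (nn : nat -> nat) :
  nn 0 = 0%N -> (forall i, nn i < nn i.+1)%N -> (forall i, is_pal (pref w (nn i))) ->
  (forall i q, is_pal q -> prefix (pref w (nn i).+1) q -> (nn i.+1 <= size q)%N) ->
  forall m, is_pal (pref w m) <-> exists i, nn i = m.
Proof.
move=> H0 Hinc Hpal Hmin m; split; last by move=> [i <-].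
move=> Pm.
suff H : forall i, (exists i', nn i' = m) \/ (nn i <= m)%N.
  case: (H m.+1) => // H'; have := inc_ge Hinc m.+1; rewrite H0 add0n => H''.
  by have := leq_trans H'' H'; rewrite ltnn.
elim=> [|i [IH|IH]]; [by right; rewrite H0|by left|].
move: IH; rewrite leq_eqVlt => /orP [/eqP <-|lt]; first by left; exists i.
right; have := Hmin i _ Pm; rewrite size_pref; apply.
exact: prefix_pref.
Qed.

Lemma pref_ext (A : Type) (f g : nat -> A) n : (forall i, (i < n)%N -> f i = g i) -> pref f n = pref g n.
Proof.
move=> H; apply: (@eq_from_nth _ (f 0)); rewrite !size_pref // => i Hi.
by rewrite !nth_pref // H.
Qed.

Lemma justin (A : eqType) (D : nat -> A) (w : nat -> A) (nn : nat -> nat) :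
  nn 0 = 0%N -> (forall i, nn i < nn i.+1)%N -> (forall i, is_pal (pref w (nn i))) ->
  (forall i, w (nn i) = D i) ->
  (forall i q, is_pal q -> prefix (pref w (nn i).+1) q -> (nn i.+1 <= size q)%N) ->
  forall k, nn k.+1 = match lastocc D (D k) k with
                      | Some j => ((nn k + nn k) - nn j)%N
                      | None => (nn k + nn k).+1 end.
Proof.
move=> H0 Hinc Hpal Hw Hmin k.
have Henum := pal_enum H0 Hinc Hpal Hmin.
set b := nn k; set L := nn k.+1.
have bL : (b < L)%N by exact: Hinc.
have /palP Pb := Hpal k; have /palP PL := Hpal k.+1.
rewrite -/b -/L in Pb PL.
have key : (L <= (b + b))%N -> exists k', [/\ (k' < k)%N, nn k' = ((b + b) - L)%N & D k' = D k].
  move=> Lb; set m' := ((b + b) - L)%N.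
  have m'b : (m' < b)%N by rewrite /m'; lia.
  have Pm : is_pal (pref w m').
    apply/palP => i im.
    have e1 : w i = w (L - b + i).
      transitivity (w (b - i.+1)); first by rewrite Pb //; lia.
      rewrite -(PL (b - i.+1)); last by lia.
      congr w; lia.
    rewrite e1 -(Pb (m' - i.+1)); last by lia.
    congr w; rewrite /m'; lia.
  have [k' Hk'] := (Henum m').1 Pm.
  exists k'; split => //.
    by rewrite -(inc_ltE Hinc) Hk'.
  rewrite -Hw Hk' -(Pb m') // -Hw -/b.
  rewrite -(PL (b - m'.+1)); last by lia.
  congr w; rewrite /m'; lia.
case E: (lastocc D (D k) k) => [j|].
  have [jk Dj Hbet] := lastocc_some E.
  set a := nn j.
  have ab : (a < b)%N by rewrite /a /b inc_ltE.
  apply/eqP; rewrite eqn_leq; apply/andP; split.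
    pose p := (b - a)%N.
    pose f := fun i => if (i < b)%N then w i else w (i - p)%N.
    have per := per_pal (Hpal j) (Hpal k) (ltnW ab); rewrite -/a -/b -/p in per.
    have Pf : is_pal (pref f (b + p)).
      apply/palP => i Hi; rewrite /f.
      case: ifP => h1; case: ifP => h2.
      - have -> : (b + p - i.+1 = b - (i - p).+1)%N by lia.
        rewrite Pb; last by lia.
        have {2}-> : i = ((i - p) + p)%N by lia.
        by rewrite per //; lia.
      - by rewrite -(Pb (i - p)); [congr w|]; lia.
      - by rewrite -(Pb i); [congr w|]; lia.
      - move/negbT: h1; move/negbT: h2; lia.
    have Hpre : prefix (pref w b.+1) (pref f (b + p)).
      have -> : pref w b.+1 = pref f b.+1.
        apply: pref_ext => i; rewrite ltnS leq_eqVlt => /orP [/eqP ->|ib].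
          by rewrite /f ltnn /p (_ : (b - (b - a) = a)%N) ?/a ?Hw ?Dj //; lia.
        by rewrite /f ib.
      by apply: prefix_pref; lia.
    have := Hmin k _ Pf Hpre; rewrite size_pref -/L; lia.
  rewrite leqNgt; apply/negP => Hlt.
  have [k' [k'k Hk' Dk']] := key (leq_trans (ltnW Hlt) (leq_subr _ _)).
  have : (j < k')%N by rewrite -(inc_ltE Hinc) Hk' -/a; lia.
  by move=> jk'; have := Hbet k'; rewrite jk' k'k Dk' eqxx => /(_ isT).
have Hnone := lastocc_none E.
apply/eqP; rewrite eqn_leq; apply/andP; split.
  pose f := fun i => if (i <= b)%N then w i else w ((b + b) - i)%N.
  have Pf : is_pal (pref f (b + b).+1).
    apply/palP => i Hi; rewrite /f.
    by case: ifP => h1; case: ifP => h2; congr w; lia.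
  have Hpre : prefix (pref w b.+1) (pref f (b + b).+1).
    have -> : pref w b.+1 = pref f b.+1.
      by apply: pref_ext => i ib; rewrite /f -ltnS ib.
    by apply: prefix_pref; lia.
  by have := Hmin k _ Pf Hpre; rewrite size_pref.
rewrite leqNgt ltnS; apply/negP => Hle.
have [k' [k'k _ Dk']] := key Hle.
by have := Hnone k' k'k; rewrite Dk' eqxx.
Qed.

Definition lval (A : eqType) (D : nat -> A) (nn : nat -> nat) (x : A) (k : nat) : nat :=
  match lastocc D x k with Some j => nn j | None => 0%N end.

Definition justin_rec (A : eqType) (D : nat -> A) (nn : nat -> nat) :=
  forall k, nn k.+1 = match lastocc D (D k) k with
                      | Some j => ((nn k + nn k) - nn j)%N
                      | None => (nn k + nn k).+1 end.

Lemma lval_miss (A : eqType) (D : nat -> A) nn x k : D k != x -> lval D nn x k.+1 = lval D nn x k.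
Proof. by rewrite /lval /= => /negbTE ->. Qed.

Lemma lval_hit (A : eqType) (D : nat -> A) nn x k :
  (forall i, nn i < nn i.+1)%N -> justin_rec D nn -> D k = x ->
  [/\ lval D nn x k.+1 = nn k, (lval D nn x k <= nn k)%N &
      (nn k.+1 = nn k + nn k - lval D nn x k)%N \/ nn k.+1 = (nn k + nn k).+1].
Proof.
move=> Hinc HJ Dk; rewrite /lval /= Dk eqxx; split => //.
  case E: (lastocc D x k) => [j|] //.
  by have [jk _ _] := lastocc_some E; apply: ltnW; rewrite inc_ltE.
rewrite HJ Dk; case: (lastocc D x k) => [j|]; by [left|right].
Qed.

Lemma lval_inv (A : eqType) (D : nat -> A) nn x y z :
  (forall i, nn i < nn i.+1)%N -> justin_rec D nn -> x != y -> y != z -> z != x ->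
  forall k, (lval D nn x k + lval D nn y k + lval D nn z k <= nn k)%N.
Proof.
move=> Hinc HJ xy yz zx; elim=> [|k IH]; first by rewrite /lval /=.
have Hk := Hinc k.
case: (eqVneq (D k) x) => [Ex|Nx].
  have [h1 h2 h3] := lval_hit Hinc HJ Ex.
  rewrite (lval_miss nn (_ : D k != y)); last by rewrite Ex.
  rewrite (lval_miss nn (_ : D k != z)); last by rewrite Ex eq_sym.
  case: h3; lia.
case: (eqVneq (D k) y) => [Ey|Ny].
  have [h1 h2 h3] := lval_hit Hinc HJ Ey.
  rewrite (lval_miss nn Nx).
  rewrite (lval_miss nn (_ : D k != z)); last by rewrite Ey.
  case: h3; lia.
case: (eqVneq (D k) z) => [Ez|Nz].
  have [h1 h2 h3] := lval_hit Hinc HJ Ez.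
  rewrite (lval_miss nn Nx) (lval_miss nn Ny).
  case: h3; lia.
rewrite (lval_miss nn Nx) (lval_miss nn Ny) (lval_miss nn Nz).
lia.
Qed.

Lemma lastocc_ge (A : eqType) (D : nat -> A) x k i : (i < k)%N -> D i = x ->
  exists2 j, lastocc D x k = Some j & (i <= j)%N.
Proof.
elim: k => // k IH; rewrite ltnS leq_eqVlt => /orP [/eqP ->|ik] Di /=.
  by rewrite Di eqxx; exists k.
case: eqP => _; first by exists k => //; exact: ltnW.
exact: IH.
Qed.

Definition occb (A : eqType) (D : nat -> A) (l : A) (N k : nat) : bool :=
  has (fun i => D i == l) (iota N (k.+1 - N)).

Lemma occbP (A : eqType) (D : nat -> A) l N k :
  reflect (exists i, [/\ (N <= i)%N, (i <= k)%N & D i = l]) (occb D l N k).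
Proof.
apply: (iffP hasP) => [[i]|[i [Ni ik Di]]].
  rewrite mem_iota => /andP [Ni ik] /eqP Di; exists i; split => //; lia.
by exists i; [rewrite mem_iota; lia|apply/eqP].
Qed.

Lemma third_use (A : eqType) (D : nat -> A) (a b c : A) :
  a != b -> b != c -> c != a ->
  (forall (l : A) (N : nat), exists n, (N <= n)%N /\ D n = l) ->
  forall N, exists k x z, [/\ (N < k)%N, D k = x, x != D k.-1,
      z != x & z != D k.-1] /\
      (forall j, lastocc D x k = Some j -> (j < N)%N) /\
      (exists2 jz, lastocc D z k = Some jz & (N <= jz)%N).
Proof.
move=> ab bc ca Hs N.
pose P k := [&& occb D a N k, occb D b N k & occb D c N k].
have exP : exists k, P k.
  have [na [Na Da]] := Hs a N; have [nb [Nb Db]] := Hs b N; have [nc [Nc Dc]] := Hs c N.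
  exists (maxn na (maxn nb nc)); rewrite /P; apply/and3P; split; apply/occbP.
  - by exists na; split => //; lia.
  - by exists nb; split => //; lia.
  - by exists nc; split => //; lia.
have [k Pk kmin] := find_ex_minn exP.
have Nk : (N <= k)%N.
  by move: Pk => /and3P [/occbP [i [Ni ik _]] _ _]; exact: leq_trans ik.
have NPk1 : (N < k)%N -> ~~ P k.-1.
  move=> Nk1; apply/negP => /kmin; case: k {Pk kmin Nk} Nk1 => // k _; rewrite ltnn.
  by [].
(* the letter at k is one which does not occur in [N, k-1] *)
have occ_split l : occb D l N k -> D k = l \/ ((N < k)%N /\ occb D l N k.-1).
  move=> /occbP [i [Ni ik Di]]; move: ik; rewrite leq_eqVlt => /orP [/eqP <-|ik]; first by left.
  right; split; first lia.
  by apply/occbP; exists i; split => //; lia.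
have Hk : (N < k)%N.
  rewrite ltn_neqAle Nk andbT; apply/negP => /eqP Ek; subst k.
  move: Pk => /and3P [/occbP [i [Ni ik Di]] /occbP [i' [Ni' ik' Di']] _].
  have ei : i = N by lia.
  have ei' : i' = N by lia.
  by move: ab; rewrite -Di -Di' ei ei' eqxx.
have NP := NPk1 Hk.
have concl : forall x u v, D k = x -> ~~ occb D x N k.-1 -> occb D u N k.-1 -> occb D v N k.-1 ->
    u != x -> v != x -> u != v ->
    exists k0 x0 z, [/\ (N < k0)%N, D k0 = x0, x0 != D k0.-1, z != x0 & z != D k0.-1] /\
      (forall j, lastocc D x0 k0 = Some j -> (j < N)%N) /\
      (exists2 jz, lastocc D z k0 = Some jz & (N <= jz)%N).
  move=> x u v Dk nox ou ov ux vx uv.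
  have xprev : x != D k.-1.
    apply/negP => /eqP E; move/negP: nox; apply; apply/occbP; exists k.-1; split => //; lia.
  have lastx : forall j, lastocc D x k = Some j -> (j < N)%N.
    move=> j /lastocc_some [jk Dj _]; rewrite ltnNge; apply/negP => Nj.
    move/negP: nox; apply; apply/occbP; exists j; split => //; lia.
  have pick : forall z, occb D z N k.-1 -> exists2 jz, lastocc D z k = Some jz & (N <= jz)%N.
    move=> z /occbP [i [Ni ik Di]].
    have ik' : (i < k)%N by lia.
    have [j Hj ij] := lastocc_ge ik' Di.
    by exists j => //; exact: leq_trans ij.
  case: (eqVneq u (D k.-1)) => [Eu|Nu].
    exists k, x, v; split; [split => //|split => //; exact: pick].
    by rewrite -Eu eq_sym.
  exists k, x, u; split; [split => //|split => //; exact: pick].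
move: Pk; rewrite /P => /and3P [oa ob oc].
have NP' : ~~ [&& occb D a N k.-1, occb D b N k.-1 & occb D c N k.-1] := NP.
case: (occ_split a oa) => [Ea|[_ oa']].
  have ob' : occb D b N k.-1.
    by case: (occ_split b ob) => [Eb|[]//]; move: ab; rewrite -Ea -Eb eqxx.
  have oc' : occb D c N k.-1.
    by case: (occ_split c oc) => [Ec|[]//]; move: ca; rewrite -Ea -Ec eqxx.
  have noa : ~~ occb D a N k.-1 by apply/negP => oa'; move: NP'; rewrite oa' ob' oc'.
  by apply: (concl a b c) => //; rewrite eq_sym.
case: (occ_split b ob) => [Eb|[_ ob']].
  have oc' : occb D c N k.-1.
    by case: (occ_split c oc) => [Ec|[]//]; move: bc; rewrite -Eb -Ec eqxx.
  have nob : ~~ occb D b N k.-1 by apply/negP => ob'; move: NP'; rewrite oa' ob' oc'.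
  by apply: (concl b a c) => //; rewrite eq_sym.
case: (occ_split c oc) => [Ec|[_ oc']].
  have noc : ~~ occb D c N k.-1 by apply/negP => oc'; move: NP'; rewrite oa' ob' oc'.
  by apply: (concl c a b) => //; rewrite eq_sym.
by move: NP'; rewrite oa' ob' oc'.
Qed.

Lemma sqrt3_facts : let s := Num.sqrt (3 : R) in (0 <= s)%R /\ (s * s = 3)%R.
Proof.
have E3 : (3 : R) = (3%:R)%R by rewrite IZRposE INRE.
move=> s; split; first exact: sqrtr_ge0.
by rewrite /s E3 -expr2 sqr_sqrtr // ler0n.
Qed.

Lemma real_contra1 (s a b j z : R) : (0 <= s)%R -> (s * s = 3)%R -> (0 < a)%R ->
  (j + b + z <= a)%R -> (j <= z)%R -> (a < s * b)%R -> (a + a - j < s * a)%R -> False.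
Proof.
move=> s0 ss a0 h1 h2 h3 h4.
have h5 : (s * (b + j + j) <= s * a)%R by apply: ler_wpM2l => //; lra.
have h6 : (s * ((2 - s) * a) <= s * j)%R by apply: ler_wpM2l => //; lra.
have h7 : (s * ((2 - s) * a) = 2 * s * a - 3 * a)%R by rewrite -ss; ring.
have h8 : (3 * s * a < 5 * a)%R by lra.
have h9 : (3 * s < 5)%R.
  by rewrite -(ltr_pM2r a0); lra.
nra.
Qed.

Lemma real_contra2 (s a : R) : (0 <= s)%R -> (s * s = 3)%R -> (0 < a)%R ->
  (a + a + 1 < s * a)%R -> False.
Proof.
move=> s0 ss a0 h.
have h1 : (2 * a < s * a)%R by lra.
have h2 : (2 < s)%R by rewrite -(ltr_pM2r a0); lra.
nra.
Qed.

Lemma no_three (A : finType) (D : nat -> A) (nn : nat -> nat) :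
  nn 0 = 0%N -> (forall i, nn i < nn i.+1)%N -> justin_rec D nn ->
  (forall (l : A) (N : nat), exists n, (N <= n)%N /\ D n = l) ->
  (exists K, forall k, (K <= k)%N -> ((nn k.+1)%:R < Num.sqrt 3 * (nn k)%:R :> R)%R) ->
  (#|A| <= 2)%N.
Proof.
move=> H0 Hinc HJ Hs [K HK].
rewrite leqNgt; apply/negP => /card_gt2P [a [b [c [_ [ab bc ca]]]]].
have [k [x [z [[Nk Dk xp zx zp] [Hx [jz Hjz Njz]]]]]] := third_use ab bc ca Hs K.+1.
set y := D k.-1 in xp zp.
have zp' : y != z by rewrite eq_sym.
have inv := lval_inv Hinc HJ xp zp' zx k.
have k0 : (0 < k)%N := ltn_trans (ltn0Sn K) Nk.
have ly : lval D nn y k = nn k.-1.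
  rewrite /lval (@lastocc_someI _ _ _ _ k.-1) //; first by rewrite ltn_predL.
  move=> i /andP [h1 h2]; exfalso.
  by move: h2; rewrite -(prednK k0) ltnS leqNgt h1.
have lz : lval D nn z k = nn jz by rewrite /lval Hjz.
have [s0 ss] := sqrt3_facts.
have a0 : (0 < (nn k)%:R :> R)%R.
  by rewrite ltr0n -H0 inc_ltE.
have hk := HK k (ltnW (ltnW Nk)).
have Kk1 : (K <= k.-1)%N by rewrite -ltnS prednK // ltnW.
have hk1 := HK k.-1 Kk1; rewrite prednK // in hk1.
have HJk := HJ k; rewrite Dk in HJk.
move: inv; rewrite ly lz /lval.
case E: (lastocc D x k) HJk => [j|] HJk inv.
  have jN := Hx j E.
  have jjz : (nn j <= nn jz)%N by apply: ltnW; rewrite inc_ltE //; exact: leq_trans jN Njz.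
  have jk : (nn j <= nn k)%N.
    exact: leq_trans (leq_addr _ _) (leq_trans (leq_addr _ _) inv).
  have r1 : (((nn j)%:R + (nn k.-1)%:R + (nn jz)%:R) <= (nn k)%:R :> R)%R.
    by rewrite -!natrD ler_nat.
  have r2 : ((nn j)%:R <= (nn jz)%:R :> R)%R by rewrite ler_nat.
  have r4 : (((nn k)%:R + (nn k)%:R - (nn j)%:R) < Num.sqrt 3 * (nn k)%:R :> R)%R.
    have side : (nn j <= nn k + nn k)%N := leq_trans jk (leq_addr _ _).
    by rewrite HJk natrB ?natrD in hk.
  exact: (real_contra1 s0 ss a0 r1 r2 hk1 r4).
apply: (real_contra2 s0 ss a0).
by rewrite HJk -addn1 !natrD in hk.
Qed.

Lemma limsup_lt (u : nat -> \bar R) (l : \bar R) :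
  (limn_esup u < l)%E -> exists N, forall k, (N <= k)%N -> (u k < l)%E.
Proof.
rewrite limn_esup_lim.
have -> : limn (esups u) = ereal_inf (range (esups u)).
  by apply/cvg_lim => //; exact: cvg_esups_inf.
move=> /ereal_inf_lt [y [N _ <-]] HN.
exists N => k Nk.
apply: le_lt_trans HN.
apply: ereal_sup_ubound => /=.
by exists k.
Qed.

Lemma inc_le (f : nat -> nat) : (forall i, (f i < f i.+1)%N) ->
  forall i j, (i <= j)%N -> (f i <= f j)%N.
Proof.
move=> Hf i j; rewrite leq_eqVlt => /orP [/eqP -> //|ij].
exact: ltnW (inc_lt Hf ij).
Qed.

Lemma same_enum (f g : nat -> nat) : (forall i, (f i < f i.+1)%N) -> (forall i, (g i < g i.+1)%N) ->
  (forall m, (exists i, f i = m) <-> (exists i, g i = m)) -> forall i, f i = g i.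
Proof.
move=> Hf Hg Hfg; elim/ltn_ind => i IH.
have [i' Hi'] := (Hfg (f i)).1 (ex_intro _ i erefl).
have [i'' Hi''] := (Hfg (g i)).2 (ex_intro _ i erefl).
have ii' : (i <= i')%N.
  rewrite leqNgt; apply/negP => i'i.
  by have := inc_lt Hf i'i; rewrite IH // Hi' ltnn.
have ii'' : (i <= i'')%N.
  rewrite leqNgt; apply/negP => i''i.
  by have := inc_lt Hg i''i; rewrite -IH // Hi'' ltnn.
apply/eqP; rewrite eqn_leq; apply/andP; split.
  by rewrite -Hi''; exact: inc_le.
by rewrite -Hi'; exact: inc_le.
Qed.

Lemma ratio_bound (nn : nat -> nat) : nn 0 = 0%N -> (forall i, (nn i < nn i.+1)%N) ->
  (delta_of nn < (Num.sqrt (3 : R))%:E)%E ->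
  exists K, forall k, (K <= k)%N -> ((nn k.+1)%:R < Num.sqrt (3 : R) * (nn k)%:R :> R)%R.
Proof.
move=> H0 Hinc /limsup_lt [N HN]; exists (maxn N 1) => k Hk.
have := HN k (leq_trans (leq_maxl _ _) Hk); rewrite lte_fin.
have k0 : (0 < (nn k)%:R :> R)%R.
  rewrite ltr0n -H0 inc_ltE //; exact: leq_trans (leq_maxr _ _) Hk.
by rewrite ltr_pdivrMr.
Qed.

Lemma lastocc_noneI (A : eqType) (D : nat -> A) x k :
  (forall i, (i < k)%N -> D i != x) -> lastocc D x k = None.
Proof.
elim: k => // k IH H /=; rewrite (negbTE (H k (ltnSn k))).
by apply: IH => i ik; apply: H; exact: ltnW.
Qed.

Lemma pref_split (T : Type) (w : nat -> T) m n :
  pref w (m + n) = pref w m ++ mkseq (fun i => w (m + i)%N) n.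
Proof.
apply: (@eq_from_nth _ (w 0)); first by rewrite size_cat !size_mkseq.
move=> i; rewrite size_pref => Hi.
rewrite nth_pref // nth_cat size_pref; case: ltnP => im; first by rewrite nth_pref.
by rewrite nth_mkseq ?subnKC //; lia.
Qed.

Lemma pref_period (T : Type) (w : nat -> T) p q r :
  (forall i, (i + p < r * p + q)%N -> w (i + p)%N = w i) ->
  pref w (r * p + q) = flatten (nseq r (pref w p)) ++ pref w q.
Proof.
elim: r => [|r IH] H; first by rewrite mul0n add0n.
rewrite /= -catA -IH; last by move=> i Hi; apply: H; lia.
rewrite mulSn -addnA pref_split; congr (_ ++ _).
apply: pref_ext => i Hi; rewrite addnC; apply: H; lia.
Qed.

Lemma sturm_sigmaSS (A : Type) (a b : A) s k :
  sturm_sigma a b s k.+2 = flatten (nseq (s k.+2) (sturm_sigma a b s k.+1)) ++ sturm_sigma a b s k.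
Proof. by rewrite /sturm_sigma /=; case: (sigma_pair a b s k). Qed.

Lemma sturm_sigma0 (A : Type) (a b : A) s : sturm_sigma a b s 0 = [:: a].
Proof. by []. Qed.

Lemma sturm_sigma1 (A : Type) (a b : A) s : sturm_sigma a b s 1 = nseq (s 1).-1 a ++ [:: b].
Proof. by []. Qed.

Lemma binary_sturm (A : eqType) (D : nat -> A) (w : nat -> A) (nn : nat -> nat) (a b : A)
  (e : nat -> nat) :
  a != b -> (forall x, x = a \/ x = b) -> D 0 = a ->
  nn 0 = 0%N -> (forall i, nn i < nn i.+1)%N -> (forall i, is_pal (pref w (nn i))) ->
  (forall i, w (nn i) = D i) -> justin_rec D nn ->
  e 0 = 0%N -> (forall k, e k < e k.+1)%N ->
  (forall k i, (e k <= i < e k.+1)%N -> D i = D (e k)) ->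
  (forall k, D (e k.+1) != D (e k)) ->
  characteristic_sturmian w.
Proof.
move=> ab Hbin Da H0 Hinc Hpal Hw HJ E0 Einc Eblk Echg.
have other : forall x y z : A, x != y -> z != y -> x = z.
  move=> x y z; case: (Hbin x) => ->; case: (Hbin y) => ->; case: (Hbin z) => ->;
    rewrite ?eqxx //; by move: ab; rewrite eq_sym => ->.
pose inc m := (nn m.+1 - nn m)%N.
have lo_in : forall k m, (e k < m < e k.+1)%N -> lastocc D (D m) m = Some m.-1.
  move=> k m /andP [km mk]; apply: lastocc_someI; first lia.
    by rewrite !(Eblk k) //; lia.
  by move=> i; lia.
have lo_e1 : lastocc D (D (e 1)) (e 1) = None.
  apply: lastocc_noneI => i ie; rewrite (Eblk 0); last by rewrite E0.
  by rewrite eq_sym Echg.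
have lo_e : forall k, lastocc D (D (e k.+2)) (e k.+2) = Some (e k.+1).-1.
  move=> k; have h1 := Einc k; have h2 := Einc k.+1.
  apply: lastocc_someI; first lia.
    rewrite (Eblk k); last by lia.
    apply: (other _ (D (e k.+1))); first by rewrite eq_sym Echg.
    exact: Echg.
  move=> i Hi; rewrite (Eblk k.+1); last by lia.
  by rewrite eq_sym Echg.
have nn_pair : forall m, (m < e 1)%N -> nn m = m /\ nn m.+1 = m.+1.
  elim=> [|m IH] me.
    by split => //; rewrite (HJ 0) /= H0.
  have [IH1 IH2] := IH (ltnW me).
  split => //.
  rewrite (HJ m.+1) (lo_in 0); last by rewrite E0; lia.
  by rewrite /= IH1 IH2; lia.
have nn_b0 : forall m, (m <= e 1)%N -> nn m = m.
  case=> [|m] me; first by [].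
  by have [_ ->] := nn_pair m me.
have inc_blk : forall k d, (e k + d < e k.+1)%N -> inc (e k + d) = inc (e k).
  move=> k; elim=> [|d IH] Hd; first by rewrite addn0.
  rewrite -IH; last by lia.
  rewrite /inc (HJ (e k + d.+1)) (lo_in k); last by lia.
  have := Hinc (e k + d); rewrite addnS /=; lia.
pose L k := if k is 0 then 1%N else inc (e k).
have incL : forall k m, (e k <= m < e k.+1)%N -> inc m = L k.
  case=> [|k] m /andP [km mk].
    by rewrite /inc /L !nn_b0 //; lia.
  have -> : m = (e k.+1 + (m - e k.+1))%N by lia.
  by rewrite inc_blk //; lia.
have nn_blk : forall k d, (d <= e k.+1 - e k)%N -> nn (e k + d) = (nn (e k) + d * L k)%N.
  move=> k; elim=> [|d IH] Hd; first by rewrite addn0 mul0n addn0.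
  have := incL k (e k + d) ltac:(lia); rewrite /inc => h.
  have := Hinc (e k + d); rewrite addnS IH; lia.
have L1 : L 1 = (e 1).+1.
  rewrite /L /inc (HJ (e 1)) lo_e1 nn_b0 //; lia.
have Lpos : forall k, (0 < L k)%N.
  by case=> // k; rewrite /L /inc; have := Hinc (e k.+1); lia.
have LSS : forall k, (L k.+2 + nn (e k.+1).-1 = nn (e k.+2))%N.
  move=> k; rewrite /L /inc (HJ (e k.+2)) lo_e.
  have : (nn (e k.+1).-1 <= nn (e k.+2))%N by apply: inc_le => //; have := Einc k.+1; lia.
  lia.
have Lend : forall k, (nn (e k.+1) = nn (e k.+1).-1 + L k)%N.
  move=> k; have := incL k (e k.+1).-1; rewrite /inc prednK; last by have := Einc k; lia.
  have := Einc k; move=> h /(_ ltac:(lia)) h'.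
  have := Hinc (e k.+1).-1; rewrite prednK; last lia.
  lia.
pose s k := if k == 1%N then (e 1).+1 else (e k - e k.-1)%N.
have Lrec : forall k, L k.+2 = (s k.+2 * L k.+1 + L k)%N.
  move=> k; have h1 := LSS k; have h2 := Lend k.
  have h3 := nn_blk k.+1 (e k.+2 - e k.+1) (leqnn _).
  rewrite subnKC in h3; last by have := Einc k.+1; lia.
  have hL : L k.+2 = inc (e k.+2) := erefl.
  rewrite /s /=; set P := ((e k.+2 - e k.+1) * L k.+1)%N in h3 *.
  lia.
have Hsig : forall k, sturm_sigma a b s k = pref w (L k) /\ sturm_sigma a b s k.+1 = pref w (L k.+1).
  elim=> [|k [IH1 IH2]].
    split.
      have w0 : w 0 = a by rewrite -Da -(Hw 0) H0.
      by rewrite sturm_sigma0 /L /pref /mkseq /= w0.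
    have s1 : (s 1).-1 = e 1 by [].
    rewrite sturm_sigma1 L1 s1 -[(e 1).+1]addn1 pref_split; congr (_ ++ _).
      apply: (@eq_from_nth _ a); first by rewrite size_nseq size_pref.
      move=> i; rewrite size_nseq => Hi; rewrite nth_nseq Hi nth_pref //.
      rewrite -(nn_b0 i); last by lia.
      rewrite Hw (Eblk 0); last by rewrite E0; lia.
      by rewrite E0.
    rewrite /mkseq /= addn0 -{1}(nn_b0 (e 1)) // Hw.
    case: (Hbin (D (e 1))) => E; last by rewrite E.
    by move: (Echg 0); rewrite E E0 Da eqxx.
  split => //.
  rewrite sturm_sigmaSS IH1 IH2 Lrec pref_period //.
  move=> i Hi.
  have hp := per_pal (Hpal (e k.+2).-1) (Hpal (e k.+2)).
  have h1 := LSS k; have h2 := Lend k.+1; have h3 := Lrec k.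
  have -> : L k.+1 = (nn (e k.+2) - nn (e k.+2).-1)%N by lia.
  apply: hp; first by apply: inc_le => //; lia.
  rewrite -Lrec in Hi; have h4 := Lpos k; have h5 := Lpos k.+1; lia.
have Lge : forall k, (k < L k)%N /\ (k.+1 < L k.+1)%N.
  elim=> [|k [IH1 IH2]]; first by rewrite L1 /=; have := Einc 0; rewrite E0 => h; split => //; lia.
  split => //; rewrite Lrec; have := Lpos k.
  have : (0 < s k.+2)%N by rewrite /s /=; have := Einc k.+1; lia.
  nia.
exists a, b, s; split => //; split.
  move=> k; case: k => // [[|k]] _; first by rewrite /s.
  by rewrite /s /=; have := Einc k.+1; lia.
move=> m; exists m => k mk; have [Hk _] := Hsig k; rewrite Hk size_pref.
have lk : (m < L k)%N by have [h _] := Lge k; lia.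
by rewrite nth_pref.
Qed.

Lemma blocks_exist (A : eqType) (D : nat -> A) :
  (forall m, exists i, (m < i)%N && (D i != D m)) ->
  exists e : nat -> nat, [/\ e 0 = 0%N, (forall k, e k < e k.+1)%N,
     (forall k i, (e k <= i < e k.+1)%N -> D i = D (e k)) &
     (forall k, D (e k.+1) != D (e k))].
Proof.
move=> hex.
pose nxt m := ex_minn (hex m).
have Pn : forall m, [/\ (m < nxt m)%N, D (nxt m) != D m &
    forall i, (m <= i < nxt m)%N -> D i = D m].
  move=> m; rewrite /nxt; case: ex_minnP => n /andP [mn Dn] nmin; split => //.
  move=> i /andP [mi iN]; apply/eqP; apply/negP => /negP Di.
  move: mi; rewrite leq_eqVlt => /orP [/eqP E|mi]; first by move: Di; rewrite E eqxx.
  by have := nmin i; rewrite mi Di => /(_ isT); rewrite leqNgt iN.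
exists (fun k => iter k nxt 0); split => //.
- by move=> k; case: (Pn (iter k nxt 0)).
- by move=> k i Hi; case: (Pn (iter k nxt 0)) => _ _; apply.
- by move=> k; case: (Pn (iter k nxt 0)).
Qed.

Unset Implicit Arguments.
Set Strict Implicit.

Theorem corollary7p4 (A : finType) (D : nat -> A) (w : nat -> A) :
  std_episturmian D w ->
  strict_directive D ->
  ~ periodic_word w ->
  (exists n : nat -> nat,
      enum_pal_prefixes w n /\ (delta_of n < (Num.sqrt (3 : R))%:E)%E) ->
  #|A| = 2 /\ characteristic_sturmian w.
Proof.
move=> [pi [H0p [Hcl Hlim]]] Hs Hnp [n' [[n'inc n'enum] Hdelta]].
pose nn := fun i => size (pi i).
have [nn0 Hinc Hpal Hw Hmin] : [/\ nn 0 = 0%N,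
      (forall i, nn i < nn i.+1)%N,
      (forall i, is_pal (pref w (nn i))),
      (forall i, w (nn i) = D i) &
      (forall i q, is_pal q -> prefix (pref w (nn i).+1) q -> (nn i.+1 <= size q)%N)]
  := epi_facts H0p Hcl Hlim.
have HJ : justin_rec D nn := justin nn0 Hinc Hpal Hw Hmin.
have Henum := pal_enum nn0 Hinc Hpal Hmin.
have Esame : forall i, n' i = nn i.
  apply: same_enum => // m; apply: iff_trans (iff_sym (n'enum m)) (Henum m).
have En : n' = nn by apply: funext.
rewrite En in Hdelta.
have [K HK] := ratio_bound nn0 Hinc Hdelta.
have le2 := no_three nn0 Hinc HJ Hs (ex_intro _ K HK).
have gt1 : (1 < #|A|)%N.
  rewrite ltnNge; apply/negP => /fintype_le1P H1.
  apply: Hnp; exists 1%N; split => // m.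
  by rewrite (H1 (w 0) (w (m + 1)%N)) (H1 (w 0) (w m)).
have cardA : #|A| = 2%N by apply/eqP; rewrite eqn_leq le2 gt1.
split => //.
set a := D 0.
have [b ab] : exists b, a != b.
  move/card_gt1P: gt1 => [x [y [_ _ xy]]].
  case: (eqVneq a x) => [ax|ax]; last by exists x.
  by exists y; rewrite ax.
have Hbin : forall x, x = a \/ x = b.
  move=> x; case: (eqVneq x a) => [->|xa]; first by left.
  case: (eqVneq x b) => [->|xb]; first by right.
  exfalso; move: le2; rewrite leqNgt => /negP; apply; apply/card_gt2P.
  by exists x, a, b; split => //; split => //; rewrite eq_sym.
have hex : forall m, exists i, (m < i)%N && (D i != D m).
  move=> m; case: (Hbin (D m)) => Dm.
    have [i [mi Di]] := Hs b m.+1; exists i; rewrite mi Di Dm /=; by rewrite eq_sym.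
  have [i [mi Di]] := Hs a m.+1; exists i; rewrite mi Di Dm /=; by [].
have [e [E0 Einc Eblk Echg]] := blocks_exist hex.
exact: (binary_sturm ab Hbin erefl nn0 Hinc Hpal Hw HJ E0 Einc Eblk Echg).
Qed.
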